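(* For $\nu>0$ let $Q_\nu(x)=\frac1x+\frac{I_{\nu+1}(x)}{I_\nu(x)}$ for $x>0$. Then $Q_\nu$ is strictly decreasing on $\left(0,\sqrt{2\nu+4}\right)$ for every $\nu>0$, and $Q_\nu$ is strictly decreasing on $(0,\infty)$ for every $\nu\in\left(0,\tfrac12\right]$.
   Context: $I_\nu$ denotes the modified Bessel function of the first kind of order $\nu$. *)

(* Defs.v *)
From Stdlib Require Import Reals Arith ClassicalEpsilon.
From Stdlib Require Import Factorial.
Open Scope R_scope.

(* The limit of a real sequence (chosen by classical description; meaningful
   when the sequence converges). *)
Definition lim_seq (u : nat -> R) : R :=
  epsilon (inhabits 0) (fun l => Un_cv u l).

Fixpoint poch_prod (s : R) (n : nat) : R :=
  match n with
  | O => s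
  | S m => poch_prod s m * (s + INR (S m))
  end.

(* Euler's Gamma function via Gauss' limit formula:
   Gamma(s) = lim_{n->oo} n! n^s / (s (s+1) ... (s+n))   (s > 0 here). *)
Definition Gamma (s : R) : R :=
  lim_seq (fun n => INR (fact n) * Rpower (INR n) s / poch_prod s n).

Definition BesselI (nu x : R) : R :=
  lim_seq (sum_f_R0 (fun k =>
     Rpower (x / 2) (2 * INR k + nu) / (INR (fact k) * Gamma (INR k + nu + 1)))).

Definition Qnu (nu x : R) : R := / x + BesselI (nu + 1) x / BesselI nu x.

(* Main.v *)
Require Import Defs.
From Stdlib Require Import Reals Lra Psatz ClassicalEpsilon Factorial Lia.
From Coquelicot Require Import Coquelicot.
Open Scope R_scope.

Lemma lim_seq_eq u l : Un_cv u l -> lim_seq u = l.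
Proof.
intros H. unfold lim_seq. apply UL_sequence with u; [|exact H].
apply epsilon_spec. exists l; exact H.
Qed.

Lemma poch_pos s n : 0 < s -> 0 < poch_prod s n.
Proof.
intros Hs; induction n as [|n IH]; [simpl; lra|].
change (poch_prod s (S n)) with (poch_prod s n * (s + INR (S n))).
apply Rmult_lt_0_compat; [exact IH|]. pose proof (pos_INR (S n)); lra.
Qed.

Lemma ln_le_xm1 x : 0 < x -> ln x <= x - 1.
Proof. intros Hx. pose proof (exp_ineq1_le (ln x)). rewrite exp_ln in H; lra. Qed.

Lemma ln_ge_1mi x : 0 < x -> 1 - / x <= ln x.
Proof. intros Hx. pose proof (ln_le_xm1 (/x) (Rinv_0_lt_compat _ Hx)).
rewrite ln_Rinv in H by lra. lra. Qed.

Lemma bern_up s u : 0 < s <= 1 -> 0 <= u -> Rpower (1+u) s <= 1 + s*u.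
Proof.
intros Hs Hu. unfold Rpower.
set (a := 1 + s*u).
assert (Ha : 0 < a) by (unfold a; nra).
assert (H1 : s * ln (1+u) <= ln a).
{ assert (E : ln (1+u) = ln ((1+u)/a) + ln a).
  { rewrite <- ln_mult. f_equal. field. lra. apply Rdiv_lt_0_compat; lra. lra. }
  pose proof (ln_le_xm1 ((1+u)/a)) as L1.
  assert (L1' : ln ((1+u)/a) <= (1+u)/a - 1) by (apply L1; apply Rdiv_lt_0_compat; lra).
  pose proof (ln_ge_1mi a Ha) as L2.
  assert (E2 : s*((1+u)/a - 1) = (1-s)*(1 - /a)).
  { unfold a in *. field. lra. }
  rewrite E.
  assert (S1 : s * ln ((1+u)/a) <= s*((1+u)/a - 1)) by (apply Rmult_le_compat_l; lra).
  assert (S2 : (1-s)*(1 - /a) <= (1-s) * ln a) by (apply Rmult_le_compat_l; lra).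
  lra. }
rewrite <- (exp_ln a Ha). destruct (Rle_lt_or_eq_dec _ _ H1) as [H|H].
- left. apply exp_increasing. exact H.
- rewrite H. lra.
Qed.

Lemma bern_low s u : 0 < s -> 0 < u -> 1 + s*(1 - /(1+u)) <= Rpower (1+u) s.
Proof.
intros Hs Hu. unfold Rpower. pose proof (exp_ineq1_le (s * ln (1+u))).
pose proof (ln_ge_1mi (1+u)). nra.
Qed.

Definition gseq s n := INR (fact n) * Rpower (INR n) s / poch_prod s n.

Lemma INR_S_pos n : 0 < INR (S n).
Proof. apply lt_0_INR; lia. Qed.

Lemma gseq_S s n : 0 < s ->
  gseq s (S (S n)) = gseq s (S n) * (INR (S (S n)) * Rpower (1 + / INR (S n)) s / (s + INR (S (S n)))).
Proof.
intros Hs. unfold gseq.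
pose proof (INR_S_pos n) as H1.
assert (E : Rpower (INR (S (S n))) s = Rpower (INR (S n)) s * Rpower (1 + / INR (S n)) s).
{ rewrite Rpower_mult_distr; [|lra|].
  f_equal. rewrite (S_INR (S n)). field. lra.
  pose proof (Rinv_0_lt_compat _ H1). lra. }
rewrite E. replace (fact (S (S n))) with (S (S n) * fact (S n))%nat by reflexivity.
rewrite mult_INR. change (poch_prod s (S (S n))) with (poch_prod s (S n) * (s + INR (S (S n)))).
pose proof (poch_pos s (S n) Hs). pose proof (INR_S_pos (S n)).
field. lra.
Qed.

Lemma gseq_growing s : 0 < s -> Un_growing (fun n => gseq s (S n)).
Proof.
intros Hs n. simpl. rewrite gseq_S by exact Hs.
assert (Hg : 0 < gseq s (S n)).
{ unfold gseq. apply Rdiv_lt_0_compat; [|apply poch_pos; exact Hs].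
  apply Rmult_lt_0_compat. apply lt_0_INR. apply lt_O_fact.
  unfold Rpower. apply exp_pos. }
assert (H1 := INR_S_pos n).
assert (Hb := bern_low s (/ INR (S n)) Hs (Rinv_0_lt_compat _ H1)).
assert (E : 1 - / (1 + / INR (S n)) = / INR (S (S n))).
{ rewrite (S_INR (S n)). field. lra. }
rewrite E in Hb.
assert (H2 := INR_S_pos (S n)).
assert (1 <= INR (S (S n)) * Rpower (1 + / INR (S n)) s / (s + INR (S (S n)))).
{ apply (Rmult_le_reg_r (s + INR (S (S n)))). lra.
  unfold Rdiv. rewrite Rmult_assoc, Rinv_l, Rmult_1_r by lra.
  apply Rle_trans with (INR (S (S n)) * (1 + s * / INR (S (S n)))).
  - right. field. lra.
  - apply Rmult_le_compat_l; lra. }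
nra.
Qed.

Definition hseq s n := INR (fact n) * Rpower (INR n + 1) s / poch_prod s n.

Lemma hseq_decr s n : 0 < s <= 1 -> hseq s (S n) <= hseq s n.
Proof.
intros Hs. unfold hseq.
assert (H1 := INR_S_pos n). pose proof (pos_INR n).
assert (E : Rpower (INR (S n) + 1) s = Rpower (INR n + 1) s * Rpower (1 + / INR (S n)) s).
{ rewrite Rpower_mult_distr; [|lra|].
  f_equal. rewrite (S_INR n). field. rewrite S_INR in H1. lra.
  pose proof (Rinv_0_lt_compat _ H1). lra. }
rewrite E. replace (fact (S n)) with (S n * fact n)%nat by reflexivity.
rewrite mult_INR. change (poch_prod s (S n)) with (poch_prod s n * (s + INR (S n))).
pose proof (poch_pos s n (proj1 Hs)).
assert (Hb := bern_up s (/ INR (S n)) Hs (Rlt_le _ _ (Rinv_0_lt_compat _ H1))).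
assert (Hf : 0 < INR (fact n)) by (apply lt_0_INR; apply lt_O_fact).
assert (Hr : 0 < Rpower (INR n + 1) s) by (unfold Rpower; apply exp_pos).
set (A := INR (fact n) * Rpower (INR n + 1) s) in *.
assert (HA : 0 < A) by (unfold A; nra).
apply Rle_trans with (A / poch_prod s n * (INR (S n) * (1 + s * / INR (S n)) / (s + INR (S n)))).
- assert (0 <= Rpower (1 + / INR (S n)) s) by (unfold Rpower; left; apply exp_pos).
  apply Rle_trans with (A / poch_prod s n * (INR (S n) * Rpower (1 + / INR (S n)) s / (s + INR (S n)))).
  right. unfold A. field. lra.
  apply Rmult_le_compat_l. apply Rlt_le, Rdiv_lt_0_compat; lra.
  unfold Rdiv. apply Rmult_le_compat_r. apply Rlt_le, Rinv_0_lt_compat; lra.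
  apply Rmult_le_compat_l; lra.
- right. field. lra.
Qed.

Lemma Rpower_1_base s : Rpower 1 s = 1.
Proof. unfold Rpower. rewrite ln_1, Rmult_0_r. apply exp_0. Qed.

Lemma Rpower_pos x s : 0 < Rpower x s.
Proof. unfold Rpower. apply exp_pos. Qed.

Lemma hseq_bound s n : 0 < s <= 1 -> hseq s n <= / s.
Proof.
intros Hs. induction n as [|n IH].
- unfold hseq. simpl. replace (0+1) with 1 by ring. rewrite Rpower_1_base. right. field. lra.
- apply Rle_trans with (hseq s n); [apply hseq_decr; exact Hs| exact IH].
Qed.

Lemma Rpower_le_base x y s : 0 < x -> x <= y -> 0 < s -> Rpower x s <= Rpower y s.
Proof.
intros Hx Hxy Hs. unfold Rpower. destruct (Rle_lt_or_eq_dec _ _ Hxy) as [H|H].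
- left. apply exp_increasing. apply Rmult_lt_compat_l; [lra|]. apply ln_increasing; lra.
- rewrite H; lra.
Qed.

Lemma gseq_le_hseq s n : 0 < s -> gseq s (S n) <= hseq s (S n).
Proof.
intros Hs. unfold gseq, hseq.
assert (H1 := INR_S_pos n).
pose proof (poch_pos s (S n) Hs).
unfold Rdiv. apply Rmult_le_compat_r. left; apply Rinv_0_lt_compat; lra.
apply Rmult_le_compat_l. apply pos_INR.
apply Rpower_le_base; lra.
Qed.

Lemma gseq_pos s n : 0 < s -> 0 < gseq s n.
Proof.
intros Hs. unfold gseq. apply Rdiv_lt_0_compat; [|apply poch_pos; exact Hs].
apply Rmult_lt_0_compat. apply lt_0_INR. apply lt_O_fact. apply Rpower_pos.
Qed.

Lemma gamma_conv_base s : 0 < s <= 1 -> exists L, 0 < L /\ Un_cv (gseq s) L.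
Proof.
intros Hs.
destruct (growing_cv (fun n => gseq s (S n)) (gseq_growing s (proj1 Hs))) as [l Hl].
{ exists (/s). intros x [n ->]. apply Rle_trans with (hseq s (S n)).
  apply gseq_le_hseq; lra. apply hseq_bound; exact Hs. }
exists l. split.
- apply Rlt_le_trans with (gseq s 1). apply gseq_pos; lra.
  apply (growing_ineq (fun n => gseq s (S n)) l (gseq_growing s (proj1 Hs)) Hl 0).
- apply is_lim_seq_Reals. apply is_lim_seq_incr_1. apply is_lim_seq_Reals. exact Hl.
Qed.

Lemma inv_lim c : 0 < c -> is_lim_seq (fun n => / (c + INR n)) 0.
Proof.
intros Hc.
assert (H : is_lim_seq (fun n => c + INR n) p_infty).
{ eapply is_lim_seq_plus. apply is_lim_seq_const. apply is_lim_seq_INR. simpl. constructor. }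
apply (is_lim_seq_inv _ _ H). discriminate.
Qed.

Lemma poch_shift s n : 0 < s -> poch_prod (s+1) n * s = poch_prod s n * (s + 1 + INR n).
Proof.
intros Hs. induction n as [|n IH].
- simpl. ring.
- change (poch_prod (s+1) (S n)) with (poch_prod (s+1) n * (s + 1 + INR (S n))).
  change (poch_prod s (S n)) with (poch_prod s n * (s + INR (S n))).
  rewrite S_INR. replace (poch_prod (s + 1) n * (s + 1 + (INR n + 1)) * s)
   with (poch_prod (s + 1) n * s * (s + 1 + (INR n + 1))) by ring.
  rewrite IH. ring.
Qed.

Lemma gamma_shift s L : 0 < s -> Un_cv (gseq s) L -> Un_cv (gseq (s+1)) (s*L).
Proof.
intros Hs HL. apply is_lim_seq_Reals. apply is_lim_seq_Reals in HL.
apply is_lim_seq_ext_loc with (fun n => gseq s n * (s - s*(s+1) * / ((s+1) + INR n))).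
- exists 1%nat. intros n Hn.
  assert (Hn' : 0 < INR n) by (apply lt_0_INR; lia).
  unfold gseq. rewrite Rpower_plus, Rpower_1 by lra.
  pose proof (poch_pos s n Hs). pose proof (poch_pos (s+1) n ltac:(lra)).
  pose proof (poch_shift s n Hs).
  assert (E : poch_prod (s+1) n = poch_prod s n * (s+1+INR n) / s) by (field_simplify_eq; lra).
  rewrite E. field. repeat split; lra.
- replace (s*L) with (L * (s - s*(s+1)*0)) by ring.
  apply is_lim_seq_mult'. exact HL.
  apply is_lim_seq_minus'. apply is_lim_seq_const.
  apply is_lim_seq_mult'. apply is_lim_seq_const. apply inv_lim. lra.
Qed.

Lemma gamma_conv s : 0 < s -> exists L, 0 < L /\ Un_cv (gseq s) L.
Proof.
intros Hs.
assert (Hgen : forall n : nat, forall s, 0 < s <= INR n + 1 -> exists L, 0 < L /\ Un_cv (gseq s) L).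
{ intros n. induction n as [|n IH]; intros s' Hs'.
  - apply gamma_conv_base. simpl in Hs'. lra.
  - destruct (Rle_or_lt s' 1) as [H|H].
    + apply gamma_conv_base. lra.
    + rewrite S_INR in Hs'. destruct (IH (s'-1)) as [L [HL1 HL2]]. lra.
      exists ((s'-1)*L). split. apply Rmult_lt_0_compat; lra.
      pose proof (gamma_shift (s'-1) L ltac:(lra) HL2) as G.
      replace (s'-1+1) with s' in G by ring. exact G. }
destruct (INR_unbounded s) as [n Hn]. apply (Hgen n). lra.
Qed.

Lemma Gamma_pos s : 0 < s -> 0 < Gamma s /\ Un_cv (gseq s) (Gamma s).
Proof.
intros Hs. destruct (gamma_conv s Hs) as [L [HL1 HL2]].
assert (E : Gamma s = L) by (apply lim_seq_eq; exact HL2).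
rewrite E. split; assumption.
Qed.

Lemma Gamma_succ s : 0 < s -> Gamma (s+1) = s * Gamma s.
Proof.
intros Hs. destruct (Gamma_pos s Hs) as [_ H].
apply lim_seq_eq. apply gamma_shift; assumption.
Qed.

Fixpoint pp (a : R) (k : nat) : R :=
  match k with O => 1 | S k => pp a k * (a + INR k) end.

Lemma Gamma_pp nu k : 0 < nu -> Gamma (INR k + nu + 1) = Gamma (nu+1) * pp (nu+1) k.
Proof.
intros Hn. induction k as [|k IH].
- simpl. rewrite Rmult_1_r. f_equal. ring.
- rewrite S_INR. replace (INR k + 1 + nu + 1) with ((INR k + nu + 1) + 1) by ring.
  rewrite Gamma_succ by (pose proof (pos_INR k); lra). rewrite IH. simpl. ring.
Qed.


Fixpoint bc (nu : R) (k : nat) : R :=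
  match k with O => 1 | S k' => bc nu k' / (INR (S k') * (nu + INR (S k'))) end.

Lemma bc_pos nu k : 0 < nu -> 0 < bc nu k.
Proof.
intros Hn. induction k as [|k IH]; [simpl; lra|].
change (bc nu (S k)) with (bc nu k / (INR (S k) * (nu + INR (S k)))).
pose proof (INR_S_pos k). apply Rdiv_lt_0_compat; [exact IH|]. nra.
Qed.

Lemma bc_pp nu k : 0 < nu -> bc nu k * (INR (fact k) * pp (nu+1) k) = 1.
Proof.
intros Hn. induction k as [|k IH]; [simpl; ring|].
change (bc nu (S k)) with (bc nu k / (INR (S k) * (nu + INR (S k)))).
replace (fact (S k)) with (S k * fact k)%nat by reflexivity. rewrite mult_INR.
change (pp (nu+1) (S k)) with (pp (nu+1) k * (nu + 1 + INR k)).
pose proof (INR_S_pos k).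
replace (nu + 1 + INR k) with (nu + INR (S k)) by (rewrite S_INR; ring).
transitivity (bc nu k * (INR (fact k) * pp (nu + 1) k)); [|exact IH]. field. split; lra.
Qed.

Lemma bc_radius nu : 0 < nu -> CV_radius (bc nu) = p_infty.
Proof.
intros Hn. apply CV_radius_infinite_DAlembert.
- intros n. pose proof (bc_pos nu n Hn). lra.
- apply is_lim_seq_le_le with (fun _ => 0) (fun n => / (1 + INR n)).
  + intros n. change (bc nu (S n)) with (bc nu n / (INR (S n) * (nu + INR (S n)))).
    pose proof (bc_pos nu n Hn). pose proof (INR_S_pos n). pose proof (pos_INR n).
    replace (bc nu n / (INR (S n) * (nu + INR (S n))) / bc nu n) with (/ (INR (S n) * (nu + INR (S n)))) by (field; split; lra).
    rewrite Rabs_right. split. left; apply Rinv_0_lt_compat; nra.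
    rewrite S_INR. apply Rinv_le_contravar. lra. rewrite S_INR in *. nra.
    left; apply Rinv_0_lt_compat; nra.
  + apply is_lim_seq_const.
  + apply inv_lim; lra.
Qed.

Definition Bf nu t := PSeries (bc nu) t.
Definition Df nu t := PSeries (PS_derive (bc nu)) t.
Definition D2f nu t := PSeries (PS_derive (PS_derive (bc nu))) t.

Lemma rad_lt a t : CV_radius a = p_infty -> Rbar_lt (Rabs t) (CV_radius a).
Proof. intros H; rewrite H; simpl; exact I. Qed.

Lemma Bf_derive nu t : 0 < nu -> is_derive (Bf nu) t (Df nu t).
Proof. intros Hn. apply is_derive_PSeries. apply rad_lt; auto. apply bc_radius; auto. Qed.

Lemma Df_derive nu t : 0 < nu -> is_derive (Df nu) t (D2f nu t).
Proof. intros Hn. apply is_derive_PSeries. apply rad_lt; auto. rewrite CV_radius_derive. apply bc_radius; auto. Qed.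

Lemma ex_ps nu t : 0 < nu -> ex_pseries (bc nu) t.
Proof. intros Hn. apply CV_radius_inside. apply rad_lt; auto. apply bc_radius; auto. Qed.
Lemma ex_ps1 nu t : 0 < nu -> ex_pseries (PS_derive (bc nu)) t.
Proof. intros Hn. apply CV_radius_inside. apply rad_lt; auto. rewrite CV_radius_derive. apply bc_radius; auto. Qed.
Lemma ex_ps2 nu t : 0 < nu -> ex_pseries (PS_derive (PS_derive (bc nu))) t.
Proof. intros Hn. apply CV_radius_inside. apply rad_lt; auto. rewrite !CV_radius_derive. apply bc_radius; auto. Qed.

Lemma coefR0 nu : 0 < nu -> 0 + (nu+1) * PS_derive (bc nu) 0 = bc nu 0.
Proof.
intros Hn. unfold PS_derive.
change (bc nu 1) with (bc nu 0 / (INR 1 * (nu + INR 1))).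
change (INR 1) with 1. field. lra.
Qed.

Lemma coefRS nu m : 0 < nu ->
  PS_derive (PS_derive (bc nu)) m + (nu+1) * PS_derive (bc nu) (S m) = bc nu (S m).
Proof.
intros Hn. unfold PS_derive.
change (bc nu (S (S m))) with (bc nu (S m) / (INR (S (S m)) * (nu + INR (S (S m))))).
pose proof (INR_S_pos m). pose proof (INR_S_pos (S m)). rewrite (S_INR (S m)) in *.
field. lra.
Qed.

Lemma ode nu t : 0 < nu -> t * D2f nu t + (nu+1) * Df nu t = Bf nu t.
Proof.
intros Hn. unfold D2f, Df, Bf.
rewrite <- PSeries_incr_1, <- PSeries_scal, <- PSeries_plus.
2: apply ex_pseries_incr_1, ex_ps2; auto.
2: apply ex_pseries_scal; [apply Rmult_comm | apply ex_ps1; auto].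
apply PSeries_ext. intros [|m]. exact (coefR0 nu Hn). exact (coefRS nu m Hn).
Qed.

Lemma term_eq nu x k : 0 < nu -> 0 < x ->
  Rpower (x / 2) (2 * INR k + nu) / (INR (fact k) * Gamma (INR k + nu + 1))
  = Rpower (x/2) nu / Gamma (nu+1) * (bc nu k * (x*x/4)^k).
Proof.
intros Hn Hx.
rewrite Rpower_plus. replace (2 * INR k) with (INR (2*k)) by (rewrite mult_INR; reflexivity).
rewrite Rpower_pow by lra. rewrite pow_mult.
replace ((x/2)^2) with (x*x/4) by field.
rewrite Gamma_pp by exact Hn.
destruct (Gamma_pos (nu+1) ltac:(lra)) as [HG _].
pose proof (bc_pp nu k Hn) as Hb.
assert (Hf : 0 < INR (fact k)) by (apply lt_0_INR; apply lt_O_fact).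
assert (Hp : pp (nu+1) k <> 0).
{ intro H0. rewrite H0 in Hb. lra. }
assert (Eb : bc nu k = / (INR (fact k) * pp (nu+1) k)).
{ apply (Rmult_eq_reg_r (INR (fact k) * pp (nu+1) k)). rewrite Hb. field. split; lra.
  apply Rmult_integral_contrapositive; split; lra. }
rewrite Eb. field. repeat split; lra.
Qed.

Lemma BesselI_eq nu x : 0 < nu -> 0 < x ->
  BesselI nu x = Rpower (x/2) nu / Gamma (nu+1) * Bf nu (x*x/4).
Proof.
intros Hn Hx. unfold BesselI. apply lim_seq_eq.
apply is_lim_seq_Reals.
apply is_lim_seq_ext with (fun n => Rpower (x/2) nu / Gamma (nu+1) * sum_n (fun k => bc nu k * (x*x/4)^k) n).
- intros n. rewrite sum_n_Reals. rewrite scal_sum. apply sum_eq. intros i _.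
  rewrite term_eq by assumption. ring.
- apply (is_lim_seq_scal_l _ (Rpower (x/2) nu / Gamma (nu+1)) (Bf nu (x*x/4))).
  pose proof (PSeries_correct _ _ (ex_ps nu (x*x/4) Hn)) as H.
  apply is_pseries_R in H. exact H.
Qed.

Lemma PSeries_nonneg a t : (forall n, 0 <= a n) -> 0 <= t -> ex_pseries a t -> 0 <= PSeries a t.
Proof.
intros Ha Ht Hex.
rewrite <- (PSeries_const_0 t). unfold PSeries.
apply Series_le. intros n. split. rewrite Rmult_0_l; lra.
rewrite Rmult_0_l. apply Rmult_le_pos. apply Ha. apply pow_le; exact Ht.
apply ex_pseries_R. exact Hex.
Qed.

Lemma PSeries_ge0 a t : (forall n, 0 <= a n) -> 0 < t ->
  (forall t, ex_pseries a t) -> a 0%nat <= PSeries a t.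
Proof.
intros Ha Ht Hex. rewrite PSeries_decr_1 by apply Hex.
assert (0 <= PSeries (PS_decr_1 a) t).
{ apply PSeries_nonneg. intros n; apply Ha. lra.
  apply ex_pseries_decr_1. right. exists (/t). change (/t * t = 1). field. lra. apply Hex. }
nra.
Qed.

Lemma Bf_pos nu t : 0 < nu -> 0 < t -> 1 <= Bf nu t.
Proof.
intros Hn Ht. unfold Bf. change 1 with (bc nu 0). apply PSeries_ge0; auto.
intros n; left; apply bc_pos; auto. intros t'; apply ex_ps; auto.
Qed.

Lemma Df_pos nu t : 0 < nu -> 0 < t -> 0 < Df nu t.
Proof.
intros Hn Ht. unfold Df. apply Rlt_le_trans with (PS_derive (bc nu) 0).
unfold PS_derive. apply Rmult_lt_0_compat. apply INR_S_pos. apply bc_pos; auto.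
apply PSeries_ge0; auto.
intros n; unfold PS_derive; left; apply Rmult_lt_0_compat. apply INR_S_pos. apply bc_pos; auto.
intros t'; apply ex_ps1; auto.
Qed.

Lemma Bf_0 nu : Bf nu 0 = 1.
Proof. unfold Bf. rewrite PSeries_0. reflexivity. Qed.

Lemma Df_0 nu : 0 < nu -> Df nu 0 = / (nu+1).
Proof. intros Hn. unfold Df. rewrite PSeries_0. unfold PS_derive.
change (bc nu 1) with (bc nu 0 / (INR 1 * (nu + INR 1))). change (INR 1) with 1. simpl. field. lra. Qed.

Lemma bc_shift nu k : 0 < nu -> bc (nu+1) k = (nu+1) * PS_derive (bc nu) k.
Proof.
intros Hn. unfold PS_derive. induction k as [|k IH].
- change (bc nu 1) with (bc nu 0 / (INR 1 * (nu + INR 1))). change (INR 1) with 1. simpl. field. lra.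
- change (bc (nu+1) (S k)) with (bc (nu+1) k / (INR (S k) * (nu + 1 + INR (S k)))).
  rewrite IH.
  change (bc nu (S (S k))) with (bc nu (S k) / (INR (S (S k)) * (nu + INR (S (S k))))).
  pose proof (INR_S_pos k). pose proof (INR_S_pos (S k)). rewrite (S_INR (S k)) in *.
  field. lra.
Qed.

Lemma Bf_shift nu t : 0 < nu -> Bf (nu+1) t = (nu+1) * Df nu t.
Proof.
intros Hn. unfold Bf, Df. rewrite <- PSeries_scal. apply PSeries_ext. intros n.
rewrite bc_shift by exact Hn. reflexivity.
Qed.

Definition fQ nu x := / x + (x/2) * Df nu (x*x/4) / Bf nu (x*x/4).

Lemma Qnu_eq nu x : 0 < nu -> 0 < x -> Qnu nu x = fQ nu x.
Proof.
intros Hn Hx. unfold Qnu, fQ.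
rewrite (BesselI_eq nu x Hn Hx), (BesselI_eq (nu+1) x ltac:(lra) Hx).
rewrite Bf_shift by exact Hn. rewrite Gamma_succ by lra.
rewrite Rpower_plus, Rpower_1 by lra.
destruct (Gamma_pos (nu+1) ltac:(lra)) as [HG _].
pose proof (Bf_pos nu (x*x/4) Hn ltac:(nra)).
pose proof (Rpower_pos (x/2) nu).
field. repeat split; lra.
Qed.

Lemma N_neg nu t : 0 < nu -> 0 < t -> t < (nu+2)/2 -> 0 < 2*(2*nu+1)*t - (nu+1) ->
  (4*t+2*(nu+1))*(2*(2*nu+1)*t - (nu+1))^2 + 4*(2*nu+1)^2*(nu+1)*t*(2*(2*nu+1)*t - (nu+1))
   - 16*(2*nu+1)^2*(nu+1)^2*t^2 < 0.
Proof. intros H0 H1 H2 H3.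
assert (H4: 0 < (nu+2) - 2*t) by lra.
assert (H5 := Rmult_lt_0_compat _ _ H3 H4).
assert (H6 := Rmult_lt_0_compat _ _ H5 H1).
assert (H7 := Rmult_lt_0_compat _ _ H5 H0).
assert (H8 := Rmult_lt_0_compat _ _ H7 H0).
assert (H9 := Rmult_lt_0_compat _ _ H6 H0).
assert (H10 := Rmult_lt_0_compat _ _ H9 H0).
assert (H11 := Rmult_lt_0_compat _ _ H8 H0).
nra. Qed.

Lemma alg_y nu t y : 0 < nu -> 0 < t -> t < (nu+2)/2 -> 0 < y ->
  0 <= (4*t+2*nu+2)*y^2 + (4*nu+2)*t*y - 4*t^2 ->
  0 < 4*y^2 + (4*nu+2)*y + 1 - 4*t.
Proof.
intros Hn Ht Ht2 Hy Hphi.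
destruct (Rlt_or_le 0 (4*y^2 + (4*nu+2)*y + 1 - 4*t)) as [H|Hg]; [exact H|exfalso].
set (a := 4*t+2*nu+2).
assert (Ha : 0 < a) by (unfold a; lra).
assert (P1 : a/4 * (4*y^2 + (4*nu+2)*y + 1 - 4*t) <= 0).
{ assert (0 <= a/4) by lra. nra. }
assert (Id : (4*t+2*nu+2)*y^2 + (4*nu+2)*t*y - 4*t^2 - a/4 * (4*y^2 + (4*nu+2)*y + 1 - 4*t)
   = (2*nu+1)*t - (nu+1)/2 - (2*nu+1)*(nu+1)*y) by (unfold a; field).
assert (Hy2 : (2*nu+1)*(nu+1)*y <= (2*nu+1)*t - (nu+1)/2) by lra.
set (u := 2*nu+1). set (w := nu+1).
set (m := (2*u*t - w)/(2*u*w)).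
assert (Hu : 0 < u) by (unfold u; lra). assert (Hw : 0 < w) by (unfold w; lra).
assert (Hym : y <= m).
{ assert (Em : m * (2*u*w) = 2*u*t - w) by (unfold m; field; lra).
  apply (Rmult_le_reg_r (2*u*w)). nra. rewrite Em. unfold u, w in *. lra. }
assert (Hz : 0 < 2*u*t - w).
{ unfold u, w in *. nra. }
assert (Hphim : (4*t+2*nu+2)*m^2 + (4*nu+2)*t*m - 4*t^2 < 0).
{ pose proof (N_neg nu t Hn Ht Ht2 Hz) as HN. fold u w in HN.
  assert (E : (4*t+2*nu+2)*m^2 + (4*nu+2)*t*m - 4*t^2 =
     ((4*t+2*w)*(2*u*t - w)^2 + 4*u^2*w*t*(2*u*t - w) - 16*u^2*w^2*t^2) / (2*u*w)^2).
  { unfold m, u, w. field. split; lra. }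
  rewrite E. unfold Rdiv. assert (HI: 0 < / (2*u*w)^2) by (apply Rinv_0_lt_compat; apply pow_lt; apply Rmult_lt_0_compat; lra).
  revert HN HI. generalize (/ (2*u*w)^2). intros I HN HI.
  set (X := (4*t+2*w)*(2*u*t - w)^2 + 4*u^2*w*t*(2*u*t - w) - 16*u^2*w^2*t^2) in *.
  assert (0 < (-X) * I) by (apply Rmult_lt_0_compat; lra). lra. }
assert (Hinc : (4*t+2*nu+2)*y^2 + (4*nu+2)*t*y <= (4*t+2*nu+2)*m^2 + (4*nu+2)*t*m).
{ assert (0 <= (m - y) * ((4*t+2*nu+2)*(m+y) + (4*nu+2)*t)).
  { apply Rmult_le_pos; [lra|]. nra. }
  nra. }
lra.
Qed.


Lemma der_cont f x l : is_derive f x l -> continuity_pt f x.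
Proof. intros H. apply derivable_continuous_pt. exists l. apply is_derive_Reals; exact H. Qed.

Lemma mono_le G dG a b : a <= b -> (forall x, a <= x <= b -> is_derive G x (dG x)) ->
  (forall x, a <= x <= b -> 0 <= dG x) -> G a <= G b.
Proof.
intros Hab HG Hd.
destruct (MVT_gen G a b dG) as [c [Hc E]].
- intros x Hx. apply HG. rewrite Rmin_left, Rmax_right in Hx by lra. lra.
- intros x Hx. apply der_cont with (dG x). apply HG. rewrite Rmin_left, Rmax_right in Hx by lra. lra.
- rewrite Rmin_left, Rmax_right in Hc by lra.
  assert (0 <= dG c * (b - a)) by (apply Rmult_le_pos; [apply Hd; lra| lra]). lra.
Qed.

Lemma ode_pos F dF c : 0 < c -> F 0 = 0 -> (forall t, is_derive F t (dF t)) ->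
  (forall t, 0 < t -> 0 <= t * dF t + c * F t) -> forall t, 0 < t -> 0 <= F t.
Proof.
intros Hc H0 HF Hpos t Ht.
set (G := fun s => Rpower s c * F s).
set (dG := fun s => c * Rpower s (c-1) * F s + Rpower s c * dF s).
assert (HdG : forall s, 0 < s -> is_derive G s (dG s)).
{ intros s Hs. unfold G, dG. apply (is_derive_mult (fun s => Rpower s c) F).
  apply is_derive_Reals. apply derivable_pt_lim_power; exact Hs. apply HF.
  intros; unfold mult; simpl; apply Rmult_comm. }
assert (HdGp : forall s, 0 < s -> 0 <= dG s).
{ intros s Hs. unfold dG.
  assert (E : Rpower s c = Rpower s (c-1) * s).
  { replace c with ((c-1)+1) at 1 by ring. rewrite Rpower_plus, Rpower_1; lra. }
  rewrite E. pose proof (Rpower_pos s (c-1)). pose proof (Hpos s Hs).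
  replace (c * Rpower s (c - 1) * F s + Rpower s (c - 1) * s * dF s)
    with (Rpower s (c-1) * (s * dF s + c * F s)) by ring.
  apply Rmult_le_pos; lra. }
destruct (Rle_or_lt 0 (F t)) as [Hok|Hneg]; [exact Hok|exfalso].
assert (HGt : G t < 0).
{ unfold G. pose proof (Rpower_pos t c). nra. }
pose proof (der_cont F 0 (dF 0) (HF 0)) as Hc0.
unfold continuity_pt, continue_in, limit1_in, limit_in in Hc0.
destruct (Hc0 (- G t) ltac:(lra)) as [alp [Halp Hal]].
set (e := Rmin (alp/2) (Rmin (t/2) 1)).
assert (He1 : 0 < e).
{ unfold e. apply Rmin_pos; [lra|]. apply Rmin_pos; lra. }
assert (He2 : e <= alp/2) by apply Rmin_l.
assert (He3 : e <= t/2) by (unfold e; eapply Rle_trans; [apply Rmin_r|apply Rmin_l]).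
assert (He4 : e <= 1) by (unfold e; eapply Rle_trans; [apply Rmin_r|apply Rmin_r]).
assert (HFe : Rabs (F e) < - G t).
{ specialize (Hal e). simpl in Hal. unfold R_dist in Hal. rewrite H0 in Hal.
  replace (F e - 0) with (F e) in Hal by ring. apply Hal. split. unfold D_x, no_cond. split; auto. lra.
  rewrite Rminus_0_r, Rabs_right; lra. }
assert (Hpe : Rpower e c <= 1).
{ rewrite <- (Rpower_1_base c). apply Rpower_le_base; lra. }
assert (HGe : G t < G e).
{ change (G e) with (Rpower e c * F e). pose proof (Rpower_pos e c).
  pose proof (Rabs_pos (F e)). pose proof (Rle_abs (- F e)) as H2. rewrite Rabs_Ropp in H2.
  assert (Rpower e c * (- F e) <= Rpower e c * Rabs (F e)) by (apply Rmult_le_compat_l; lra).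
  assert (Rpower e c * Rabs (F e) <= 1 * Rabs (F e)) by (apply Rmult_le_compat_r; lra).
  lra. }
assert (Hmon : G e <= G t).
{ apply mono_le with dG. lra. intros x Hx. apply HdG. lra. intros x Hx. apply HdGp. lra. }
lra.
Qed.

Definition Kf nu t := t * Df nu t ^ 2 + (nu+1) * Bf nu t * Df nu t - Bf nu t ^ 2.
Definition Ef nu t := 4 * t * Df nu t ^ 2 + (2*nu+2) * Df nu t ^ 2 + (4*nu+2) * Bf nu t * Df nu t - 4 * Bf nu t ^ 2.
Definition Pf nu t := Bf nu t ^ 2 * (1 - 4*t) + (4*nu+2) * t * Bf nu t * Df nu t + 4 * t^2 * Df nu t ^ 2.

Ltac exder Hn := repeat match goal with |- _ /\ _ => split end;
  repeat match goal with
  | |- True => exact I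
  | |- ex_derive (fun x => Bf _ x) _ => eexists; apply Bf_derive; exact Hn
  | |- ex_derive (fun x => Df _ x) _ => eexists; apply Df_derive; exact Hn
  end.

Lemma DerB nu t : 0 < nu -> Derive (fun x => Bf nu x) t = Df nu t.
Proof. intros Hn. apply is_derive_unique. apply Bf_derive; exact Hn. Qed.
Lemma DerD nu t : 0 < nu -> Derive (fun x => Df nu x) t = D2f nu t.
Proof. intros Hn. apply is_derive_unique. apply Df_derive; exact Hn. Qed.

Definition dKf nu t := Df nu t ^ 2 + t * (2 * Df nu t * D2f nu t) + (nu+1) * (Df nu t * Df nu t + Bf nu t * D2f nu t) - 2 * Bf nu t * Df nu t.

Lemma Kf_der nu t : 0 < nu -> is_derive (Kf nu) t (dKf nu t).
Proof.
intros Hn. unfold Kf, dKf. auto_derive. exder Hn.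
rewrite DerB, DerD by exact Hn. ring.
Qed.

Lemma Kf_ode nu t : 0 < nu -> t * dKf nu t + (nu+1) * Kf nu t = t * Df nu t ^ 2.
Proof.
intros Hn. pose proof (ode nu t Hn) as Ho.
transitivity (t * Df nu t ^ 2 + (t * D2f nu t + (nu+1) * Df nu t - Bf nu t) * (2 * t * Df nu t + (nu+1) * Bf nu t)).
unfold dKf, Kf. ring. rewrite Ho. ring.
Qed.

Lemma Kf_0 nu : 0 < nu -> Kf nu 0 = 0.
Proof. intros Hn. unfold Kf. rewrite Bf_0, Df_0 by exact Hn. field. lra. Qed.

Lemma Kf_nonneg nu t : 0 < nu -> 0 < t -> 0 <= Kf nu t.
Proof.
intros Hn Ht. apply (ode_pos (Kf nu) (dKf nu) (nu+1)); auto; try lra.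
apply Kf_0; auto. intros; apply Kf_der; auto.
intros s Hs. rewrite Kf_ode by auto. apply Rmult_le_pos; [lra|]. apply pow2_ge_0.
Qed.

Definition dEf nu t := 4 * Df nu t ^ 2 + 4 * t * (2 * Df nu t * D2f nu t) + (2*nu+2) * (2 * Df nu t * D2f nu t)
  + (4*nu+2) * (Df nu t * Df nu t + Bf nu t * D2f nu t) - 8 * Bf nu t * Df nu t.

Lemma Ef_der nu t : 0 < nu -> is_derive (Ef nu) t (dEf nu t).
Proof.
intros Hn. unfold Ef, dEf. auto_derive. exder Hn.
rewrite DerB, DerD by exact Hn. ring.
Qed.

Lemma Ef_ode nu t : 0 < nu -> t * dEf nu t + (2*nu+2) * Ef nu t = (4*nu+6) * Kf nu t.
Proof.
intros Hn. pose proof (ode nu t Hn) as Ho.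
transitivity ((4*nu+6) * Kf nu t + (t * D2f nu t + (nu+1) * Df nu t - Bf nu t) * (8 * t * Df nu t + (4*nu+4) * Df nu t + (4*nu+2) * Bf nu t)).
unfold dEf, Ef, Kf. ring. rewrite Ho. ring.
Qed.

Lemma Ef_0 nu : 0 < nu -> Ef nu 0 = 0.
Proof. intros Hn. unfold Ef. rewrite Bf_0, Df_0 by exact Hn. field. lra. Qed.

Lemma Ef_nonneg nu t : 0 < nu -> 0 < t -> 0 <= Ef nu t.
Proof.
intros Hn Ht. apply (ode_pos (Ef nu) (dEf nu) (2*nu+2)); auto; try lra.
apply Ef_0; auto. intros; apply Ef_der; auto.
intros s Hs. rewrite Ef_ode by auto. apply Rmult_le_pos; [lra|]. apply Kf_nonneg; auto.
Qed.

Definition dPf nu t := 2 * (1 - 2*nu) * Kf nu t.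

Lemma Pf_der nu t : 0 < nu -> is_derive (Pf nu) t (dPf nu t).
Proof.
intros Hn. pose proof (ode nu t Hn) as Ho.
unfold Pf. auto_derive. exder Hn.
rewrite DerB, DerD by exact Hn.
transitivity (2 * (1 - 2*nu) * Kf nu t + (t * D2f nu t + (nu+1) * Df nu t - Bf nu t) * ((4*nu+2) * Bf nu t + 8 * t * Df nu t)).
unfold dPf, Kf. ring. rewrite Ho. unfold dPf. ring.
Qed.


Lemma fQ_der nu x : 0 < nu -> 0 < x ->
  is_derive (fQ nu) x (- Pf nu (x*x/4) / (x^2 * Bf nu (x*x/4)^2)).
Proof.
intros Hn Hx.
assert (Ht : 0 < x*x/4) by nra.
pose proof (Bf_pos nu (x*x/4) Hn Ht) as HB.
pose proof (ode nu (x*x/4) Hn) as Ho.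
assert (HW : D2f nu (x*x/4) = (Bf nu (x*x/4) - (nu+1) * Df nu (x*x/4)) / (x*x/4)).
{ apply (Rmult_eq_reg_l (x*x/4)); [|lra]. rewrite <- Ho. field. lra. }
unfold fQ. auto_derive.
- exder Hn. lra. lra.
- rewrite DerB, DerD by exact Hn. change (x*x*/4) with (x*x/4). rewrite HW. unfold Pf. field. split; lra.
Qed.

Lemma Pf_pos1 nu t : 0 < nu -> 0 < t -> t < (nu+2)/2 -> 0 < Pf nu t.
Proof.
intros Hn Ht Ht2.
pose proof (Bf_pos nu t Hn Ht) as HB. pose proof (Df_pos nu t Hn Ht) as HD.
pose proof (Ef_nonneg nu t Hn Ht) as HE.
set (y := t * Df nu t / Bf nu t).
assert (Hy : 0 < y) by (unfold y; apply Rdiv_lt_0_compat; nra).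
assert (Hphi : 0 <= (4*t+2*nu+2)*y^2 + (4*nu+2)*t*y - 4*t^2).
{ assert (E : (4*t+2*nu+2)*y^2 + (4*nu+2)*t*y - 4*t^2 = Ef nu t * (t^2 / Bf nu t ^2)).
  { unfold y, Ef. field. lra. }
  rewrite E. apply Rmult_le_pos; [exact HE|]. apply Rdiv_le_0_compat. nra. nra. }
pose proof (alg_y nu t y Hn Ht Ht2 Hy Hphi) as Hg.
assert (E : Pf nu t = Bf nu t ^ 2 * (4*y^2 + (4*nu+2)*y + 1 - 4*t)).
{ unfold y, Pf. field. lra. }
rewrite E. apply Rmult_lt_0_compat; nra.
Qed.

Lemma Pf_0 nu : Pf nu 0 = 1.
Proof. unfold Pf. rewrite Bf_0. ring. Qed.

Lemma Pf_pos2 nu t : 0 < nu -> nu <= 1/2 -> 0 < t -> 0 < Pf nu t.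
Proof.
intros Hn Hn2 Ht.
assert (H : Pf nu 0 <= Pf nu t).
{ apply mono_le with (dPf nu). lra. intros; apply Pf_der; auto.
  intros s Hs. unfold dPf. apply Rmult_le_pos. lra.
  destruct (Rle_lt_or_eq_dec 0 s (proj1 Hs)) as [H|H].
  apply Kf_nonneg; auto. rewrite <- H, Kf_0; auto; lra. }
rewrite Pf_0 in H. lra.
Qed.

Lemma fQ_decr nu (b : Rbar) : 0 < nu ->
  (forall x, 0 < x -> Rbar_lt x b -> 0 < Pf nu (x*x/4)) ->
  forall x y, 0 < x -> x < y -> Rbar_lt y b -> fQ nu y < fQ nu x.
Proof.
intros Hn HP x y Hx Hxy Hy.
assert (H : - fQ nu x < - fQ nu y).
{ apply (incr_function (fun z => - fQ nu z) (Finite 0) b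
    (fun z => Pf nu (z*z/4) / (z^2 * Bf nu (z*z/4)^2))); auto.
  - intros z Hz1 Hz2. simpl in Hz1.
    replace (Pf nu (z*z/4) / (z^2 * Bf nu (z*z/4)^2)) with (- (- Pf nu (z*z/4) / (z^2 * Bf nu (z*z/4)^2))).
    exact (is_derive_opp (fQ nu) z _ (fQ_der nu z Hn Hz1)).
    pose proof (Bf_pos nu (z*z/4) Hn ltac:(nra)). field. split; nra.
  - intros z Hz1 Hz2. simpl in Hz1. apply Rdiv_lt_0_compat. apply HP; auto.
    pose proof (Bf_pos nu (z*z/4) Hn ltac:(nra)). apply Rmult_lt_0_compat; nra. }
lra.
Qed.

Theorem mainTheorem11 :
  (forall nu : R, 0 < nu ->
     forall x y : R, 0 < x -> x < y -> y < sqrt (2 * nu + 4) ->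
       Qnu nu y < Qnu nu x) /\
  (forall nu : R, 0 < nu -> nu <= 1 / 2 ->
     forall x y : R, 0 < x -> x < y -> Qnu nu y < Qnu nu x).
Proof.
split.
- intros nu Hn x y Hx Hxy Hy.
  rewrite !Qnu_eq by lra.
  apply (fQ_decr nu (Finite (sqrt (2*nu+4)))); auto.
  intros z Hz Hzb. simpl in Hzb. apply Pf_pos1; auto. nra.
  assert (z * z < 2*nu+4).
  { pose proof (sqrt_sqrt (2*nu+4) ltac:(lra)). pose proof (sqrt_pos (2*nu+4)). nra. }
  lra.
- intros nu Hn Hn2 x y Hx Hxy.
  rewrite !Qnu_eq by lra.
  apply (fQ_decr nu p_infty); auto.
  intros z Hz _. apply Pf_pos2; auto. nra.
  simpl; exact I.
Qed.
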